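(* There is an absolute constant $K$ such that for all independent real random variables $X,Y,Z$ with bounded ranges and all $n\in\mathbb{N}$, $$H_n(X+Y+Z)\le H_n(X+Z)+H_n(Y+Z)-H_n(Z)+K,$$ $$H_n(X+Y)\le H_n(X+Z)+H_n(Y+Z)-H_n(Z)+K,\qquad H_n(X-Y)\le H_n(X+Z)+H_n(Y+Z)-H_n(Z)+K.$$
   Context: Logarithms base 2. $D_n(x)=\lfloor 2^nx\rfloor/2^n$. For a bounded random variable $W$, $H_n(W):=H(D_n(W))$, the Shannon entropy of $D_n(W)$. *)

(* Defs.v *)
From HB Require Import structures.
From mathcomp Require Import all_boot all_order all_algebra.
From mathcomp Require Import all_classical all_reals all_analysis.
Set Implicit Arguments. Unset Strict Implicit. Unset Printing Implicit Defensive.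
Import Order.TTheory GRing.Theory Num.Theory.
Local Open Scope classical_set_scope.
Local Open Scope ring_scope.

Definition log2 {R : realType} (x : R) : R := ln x / ln 2.

Definition Dn {R : realType} (n : nat) (x : R) : R :=
  (Num.floor (2 ^+ n * x))%:~R / 2 ^+ n.

Definition ent_term {R : realType} (p : R) : R :=
  if p == 0 then 0 else - (p * log2 p).

Definition shannon_entropy {d : measure_display} {T : measurableType d}
  {R : realType} (P : probability T R) (V : T -> R) : \bar R :=
  (\esum_(x in [set: R]) (ent_term (fine (P (V @^-1` [set x]))))%:E)%E.

Definition Hn {d : measure_display} {T : measurableType d}
  {R : realType} (P : probability T R) (n : nat) (W : T -> R) : \bar R :=
  shannon_entropy P (fun t => Dn n (W t)).

Definition independent3 {d : measure_display} {T : measurableType d}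
  {R : realType} (P : probability T R) (X Y Z : T -> R) : Prop :=
  forall A B C : set R, measurable A -> measurable B -> measurable C ->
    P (X @^-1` A `&` Y @^-1` B `&` Z @^-1` C)
    = (P (X @^-1` A) * P (Y @^-1` B) * P (Z @^-1` C))%E.

Definition bounded_rv {T : Type} {R : realType} (W : T -> R) : Prop :=
  exists M : R, forall t, `|W t| <= M.

(* Main.v *)
Require Import Defs.
From HB Require Import structures.
From mathcomp Require Import all_boot all_order all_algebra.
From mathcomp Require Import all_classical all_reals all_analysis.
From mathcomp Require Import ring lra zify.
Set Implicit Arguments. Unset Strict Implicit. Unset Printing Implicit Defensive.
Import Order.TTheory GRing.Theory Num.Theory.
Local Open Scope classical_set_scope.
Local Open Scope ring_scope.

Section Ent.
Variables (R : realType) (J : eqType) (s : seq J) (q : J -> R).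
Hypothesis q0 : forall j, 0 <= q j.
Hypothesis q1 : \sum_(j <- s) q j = 1.

Definition QQ (V : eqType) (f : J -> V) (j : J) : R :=
  \sum_(i <- s) q i * (f i == f j)%:R.
Definition HH (V : eqType) (f : J -> V) : R :=
  \sum_(j <- s) q j * - ln (QQ f j).

Lemma QQ_ge (V : eqType) (f : J -> V) j : j \in s -> q j <= QQ f j.
Proof.
move=> js; rewrite /QQ (big_rem j js) /= eqxx mulr1 lerDl.
by apply: sumr_ge0 => i _; rewrite mulr_ge0.
Qed.

Lemma QQ_le1 (V : eqType) (f : J -> V) j : QQ f j <= 1.
Proof.
rewrite -q1 /QQ; apply: ler_sum => i _.
by rewrite ler_piMr //; case: (_ == _).
Qed.

Lemma QQ_gt0 (V : eqType) (f : J -> V) j : j \in s -> 0 < q j -> 0 < QQ f j.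
Proof. by move=> js qj; apply: lt_le_trans (QQ_ge f js). Qed.

Lemma HH_ge0 (V : eqType) (f : J -> V) : 0 <= HH f.
Proof.
rewrite /HH big_seq; apply: sumr_ge0 => j js.
rewrite mulr_ge0 // oppr_ge0; exact: ln_le0 (QQ_le1 f j).
Qed.

Lemma HH_le (V W : eqType) (f : J -> V) (g : J -> W) (h : V -> W) :
  (forall j, g j = h (f j)) -> HH g <= HH f.
Proof.
move=> gh; rewrite /HH !big_seq; apply: ler_sum => j js.
have [qj0|qjp] := eqVneq (q j) 0; first by rewrite qj0 !mul0r.
have qjp' : 0 < q j by rewrite lt0r qjp q0.
rewrite ler_wpM2l // lerN2 ler_ln ?posrE ?QQ_gt0 //.
rewrite /QQ; apply: ler_sum => i _; rewrite ler_wpM2l //.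
by rewrite !gh; case: eqP => [->|]; rewrite ?eqxx.
Qed.


Lemma ratio_le (V : eqType) (f : J -> V) v :
  \sum_(j <- s) q j * (f j == v)%:R / QQ f j <= (has (fun j => f j == v) s)%:R.
Proof.
case: hasP => [[j0 j0s fj0]|hn]; last first.
  rewrite big_seq big1 // => j js.
  case: eqP => [fjv|_]; last by rewrite /= mulr0 mul0r.
  by exfalso; apply: hn; exists j => //; rewrite fjv.
set C := \sum_(i <- s) q i * (f i == v)%:R.
have -> : \sum_(j <- s) q j * (f j == v)%:R / QQ f j = C / C.
  rewrite /C mulr_suml; apply: eq_bigr => j _.
  case: eqP => [fjv|]; last by rewrite /= !mulr0 !mul0r.
  by rewrite /QQ fjv.
have [->|C0] := eqVneq C 0; first by rewrite mul0r.
by rewrite mulfV.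
Qed.

Lemma ln_le_sub1 (r : R) : 0 < r -> ln r <= r - 1.
Proof.
move=> r0; have := @le_ln1Dx R (r - 1); rewrite (addrC 1) subrK; apply.
lra.
Qed.

Lemma key_sum (V W U : eqType) (f : J -> V) (g : J -> W) (w1 : V -> U) (w2 : W -> U) :
  (forall j, w1 (f j) = w2 (g j)) ->
  \sum_(j <- s) q j * (QQ f j * QQ g j / (QQ (fun j => (f j, g j)) j * QQ (fun j => w1 (f j)) j))
  <= 1.
Proof.
move=> hw.
set fg := fun j => (f j, g j); set w := fun j => w1 (f j).
pose T i k j := q j * (q i * (f i == f j)%:R) * (q k * (g k == g j)%:R) / (QQ fg j * QQ w j).
have -> : \sum_(j <- s) q j * (QQ f j * QQ g j / (QQ fg j * QQ w j))
   = \sum_(i <- s) \sum_(k <- s) \sum_(j <- s) T i k j.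
  have -> : \sum_(i <- s) \sum_(k <- s) \sum_(j <- s) T i k j
          = \sum_(j <- s) \sum_(i <- s) \sum_(k <- s) T i k j.
    under eq_bigr => i _ do rewrite exchange_big.
    by rewrite exchange_big.
  apply: eq_bigr => j _.
  have -> : QQ f j * QQ g j = \sum_(i <- s) \sum_(k <- s)
      (q i * (f i == f j)%:R) * (q k * (g k == g j)%:R).
    by rewrite /QQ big_distrl; apply: eq_bigr => i _; rewrite big_distrr.
  rewrite big_distrl /= big_distrr /=; apply: eq_bigr => i _.
  rewrite big_distrl /= big_distrr /=; apply: eq_bigr => k _.
  by rewrite /T !mulrA.
apply: (@le_trans _ _ (\sum_(i <- s) \sum_(k <- s)
    q i * q k * (w1 (f i) == w2 (g k))%:R / QQ w i)).
  apply: ler_sum => i _; apply: ler_sum => k _.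
  have -> : \sum_(j <- s) T i k j =
      q i * q k / QQ w i * \sum_(j <- s) q j * (fg j == (f i, g k))%:R / QQ fg j.
    rewrite mulr_sumr; apply: eq_bigr => j _; rewrite /T /fg.
    case: (eqVneq (f i) (f j)) => [fij|nf]; last first.
      by rewrite /= xpair_eqE [f j == _]eq_sym (negbTE nf) /= ?mulr0 ?mul0r ?mulr0.
    case: (eqVneq (g k) (g j)) => [gkj|ng]; last first.
      by rewrite /= xpair_eqE [g j == _]eq_sym (negbTE ng) andbF /= ?mulr0 ?mul0r ?mulr0.
    have -> : QQ w j = QQ w i by rewrite /QQ /w fij.
    rewrite fij gkj !eqxx /= !mulr1 invfM; ring.
  have qi : 0 <= q i * q k / QQ w i.
    by rewrite divr_ge0 ?mulr_ge0 // /QQ sumr_ge0 // => l _; rewrite mulr_ge0.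
  apply: le_trans (ler_wpM2l qi (ratio_le fg (f i, g k))) _.
  rewrite [X in _ <= X]mulrAC ler_wpM2l //.
  case: hasP => [[j js /eqP]|_]; last by case: (_ == _).
  by rewrite /fg => -[<- <-]; rewrite hw eqxx.
apply: (@le_trans _ _ (\sum_(i <- s) q i)); last by rewrite q1.
apply: ler_sum => i _.
have -> : \sum_(k <- s) q i * q k * (w1 (f i) == w2 (g k))%:R / QQ w i
    = q i / QQ w i * QQ w i.
  rewrite /QQ mulr_sumr; apply: eq_bigr => k _.
  rewrite -(hw k) [w1 (f i) == _]eq_sym /w; ring.
have [->|Q0] := eqVneq (QQ w i) 0; first by rewrite mulr0.
by rewrite -mulrA mulVf // mulr1.
Qed.

Lemma HH_submod (V W U : eqType) (f : J -> V) (g : J -> W) (w1 : V -> U) (w2 : W -> U) :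
  (forall j, w1 (f j) = w2 (g j)) ->
  HH (fun j => (f j, g j)) + HH (fun j => w1 (f j)) <= HH f + HH g.
Proof.
move=> hw; rewrite -subr_le0.
set fg := fun j => (f j, g j); set w := fun j => w1 (f j).
have -> : HH fg + HH w - (HH f + HH g) = \sum_(j <- s) q j *
    (ln (QQ f j) + ln (QQ g j) - ln (QQ fg j) - ln (QQ w j)).
  rewrite /HH -[X in X - _]big_split -[X in _ - X]big_split -sumrB.
  by apply: eq_bigr => j _ /=; ring.
apply: (@le_trans _ _ (\sum_(j <- s) (q j * (QQ f j * QQ g j / (QQ fg j * QQ w j)) - q j))).
  rewrite big_seq [X in _ <= X]big_seq; apply: ler_sum => j js.
  have [->|qn] := eqVneq (q j) 0; first by rewrite !mul0r subr0.
  have qp : 0 < q j by rewrite lt0r qn q0.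
  have pf := QQ_gt0 f js qp; have pg := QQ_gt0 g js qp.
  have pfg := QQ_gt0 fg js qp; have pw := QQ_gt0 w js qp.
  set r := (QQ f j * QQ g j / (QQ fg j * QQ w j)).
  have -> : q j * r - q j = q j * (r - 1) by ring.
  rewrite ler_wpM2l ?q0 //.
  have -> : ln (QQ f j) + ln (QQ g j) - ln (QQ fg j) - ln (QQ w j)
     = ln (QQ f j * QQ g j / (QQ fg j * QQ w j)).
    rewrite ln_div ?posrE ?mulr_gt0 // !lnM ?posrE //; ring.
  by apply: ln_le_sub1; rewrite /r divr_gt0 ?mulr_gt0.
by rewrite sumrB q1 subr_le0 (key_sum hw).
Qed.

Lemma HH_subadd (V W : eqType) (f : J -> V) (g : J -> W) :
  HH (fun j => (f j, g j)) <= HH f + HH g.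
Proof.
have := @HH_submod _ _ unit f g (fun _ => tt) (fun _ => tt) (fun _ => erefl).
apply: le_trans; rewrite lerDl; exact: HH_ge0.
Qed.

Lemma HH_logbound (V : eqType) (f : J -> V) (r : seq V) :
  (forall j, j \in s -> f j \in r) -> (0 < size r)%N ->
  HH f <= ln (size r)%:R.
Proof.
move=> fr r0; set m : R := (size r)%:R.
have m0 : 0 < m by rewrite /m ltr0n.
rewrite -subr_le0.
have -> : HH f - ln m = \sum_(j <- s) q j * (- ln (QQ f j) - ln m).
  by rewrite /HH -[X in _ - X]mul1r -q1 mulr_suml -sumrB; apply: eq_bigr => j _; ring.
apply: (@le_trans _ _ (\sum_(j <- s) (q j / QQ f j / m - q j))).
  rewrite big_seq [X in _ <= X]big_seq; apply: ler_sum => j js.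
  have [->|qn] := eqVneq (q j) 0; first by rewrite !mul0r subr0.
  have qp : 0 < q j by rewrite lt0r qn q0.
  have pf := QQ_gt0 f js qp.
  have -> : q j / QQ f j / m - q j = q j * ((QQ f j * m)^-1 - 1).
    by rewrite invfM; ring.
  rewrite ler_wpM2l ?q0 //.
  have -> : - ln (QQ f j) - ln m = ln ((QQ f j * m)^-1).
    by rewrite lnV ?posrE ?mulr_gt0 // lnM ?posrE //; ring.
  by apply: ln_le_sub1; rewrite invr_gt0 mulr_gt0.
rewrite sumrB q1 subr_le0 -mulr_suml ler_pdivrMr // mul1r.
apply: (@le_trans _ _ (\sum_(j <- s) \sum_(v <- r) q j * (f j == v)%:R / QQ f j)).
  rewrite big_seq [X in _ <= X]big_seq; apply: ler_sum => j js.
  have -> : \sum_(v <- r) q j * (f j == v)%:R / QQ f j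
     = (q j / QQ f j) * \sum_(v <- r) (f j == v)%:R.
    by rewrite mulr_sumr; apply: eq_bigr => v _; ring.
  rewrite -[X in X <= _]mulr1 ler_wpM2l; last first.
    by rewrite (big_rem (f j) (fr j js)) eqxx lerDl sumr_ge0.
  by rewrite divr_ge0 ?q0 // /QQ sumr_ge0 // => i _; rewrite mulr_ge0 ?q0.
all: try by [].
rewrite exchange_big /= /m -sum1_size natr_sum; apply: ler_sum => v _.
apply: le_trans (ratio_le f v) _.
by case: has.
Qed.

Lemma HH_indep (V1 V2 V3 : eqType) (x : J -> V1) (y : J -> V2) (z : J -> V3) :
  (forall j, j \in s -> QQ (fun j => (x j, y j, z j)) j = QQ x j * QQ y j * QQ z j) ->
  HH (fun j => (x j, y j, z j)) = HH x + HH y + HH z.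
Proof.
move=> hp; rewrite /HH -!big_split /= big_seq [RHS]big_seq; apply: eq_bigr => j js.
have [->|qn] := eqVneq (q j) 0; first by rewrite !mul0r !addr0.
have qp : 0 < q j by rewrite lt0r qn q0.
have px := QQ_gt0 x js qp; have py := QQ_gt0 y js qp; have pz := QQ_gt0 z js qp.
by rewrite hp // !lnM ?posrE ?mulr_gt0 //; ring.
Qed.

Lemma sum_ind (V : eqType) (u : seq V) (x : V) (F : V -> R) : uniq u -> x \in u ->
  \sum_(v <- u) (x == v)%:R * F v = F x.
Proof.
move=> uu xu; rewrite (bigD1_seq x xu uu) /= eqxx mul1r big1 ?Monoid.mulm1 // => v vx.
by rewrite eq_sym (negbTE vx) mul0r.
Qed.

Lemma HH_group (V : eqType) (f : J -> V) (u : seq V) : uniq u ->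
  (forall j, j \in s -> f j \in u) ->
  \sum_(v <- u) (\sum_(i <- s) q i * (f i == v)%:R) *
      - ln (\sum_(i <- s) q i * (f i == v)%:R) = HH f.
Proof.
move=> uu fu; rewrite /HH.
have -> : \sum_(j <- s) q j * - ln (QQ f j) =
   \sum_(j <- s) \sum_(v <- u) (f j == v)%:R *
        (q j * - ln (\sum_(i <- s) q i * (f i == v)%:R)).
  rewrite big_seq [RHS]big_seq; apply: eq_bigr => j js.
  by rewrite (sum_ind (fun v => q j * - ln (\sum_(i <- s) q i * (f i == v)%:R)) uu (fu j js)).
rewrite exchange_big /=; apply: eq_bigr => v _.
rewrite mulr_suml; apply: eq_bigr => j _; ring.
Qed.

End Ent.


Section Bridge.
Variables (d : measure_display) (T : measurableType d) (R : realType).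
Variables (P : probability T R) (JT : eqType) (Jf : T -> JT) (s : seq JT).
Hypothesis us : uniq s.
Hypothesis hcov : forall t, Jf t \in s.
Hypothesis hmeas : forall j, measurable (Jf @^-1` [set j]).

Definition qq j := fine (P (Jf @^-1` [set j])).

Lemma pre_split (p : pred JT) x (s' : seq JT) :
  Jf @^-1` [set j | p j && (j \in x :: s')] =
  (if p x then Jf @^-1` [set x] else set0) `|` Jf @^-1` [set j | p j && (j \in s')].
Proof.
apply/seteqP; split => t /=; rewrite in_cons.
  case/andP => pt /orP[/eqP jx|ts]; first by left; rewrite -jx pt.
  by right; rewrite pt ts.
case=> [|/andP[-> ->]]; last by rewrite orbT.
by case: ifP => // px ->; rewrite px eqxx.
Qed.

Lemma pre_meas (p : pred JT) (s' : seq JT) : measurable (Jf @^-1` [set j | p j && (j \in s')]).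
Proof.
elim: s' => [|x s' ih].
  rewrite (_ : Jf @^-1` [set j | p j && (j \in ([::] : seq JT))] = set0) //.
  by apply/seteqP; split => t //=; rewrite andbF.
rewrite pre_split; apply: measurableU => //; case: ifP => _ //; exact: hmeas.
Qed.

Lemma finP A : measurable A -> P A \is a fin_num.
Proof. move=> mA; exact: fin_num_measure. Qed.

Lemma Pbridge_gen (p : pred JT) (s' : seq JT) : uniq s' ->
  fine (P (Jf @^-1` [set j | p j && (j \in s')])) = \sum_(i <- s') qq i * (p i)%:R.
Proof.
elim: s' => [|x s' ih] /=.
  move=> _; rewrite big_nil (_ : Jf @^-1` [set j | p j && (j \in ([::] : seq JT))] = set0) ?measure0 //.
  by apply/seteqP; split => t //=; rewrite andbF.
case/andP => xs us'; rewrite pre_split big_cons measureU //; last 3 first.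
- by case: ifP => _ //; exact: hmeas.
- exact: pre_meas.
- apply/seteqP; split => t //= []; case: ifP => _ //= -> /andP[_].
  by rewrite (negbTE xs).
rewrite fineD; last 2 first.
- by apply: finP; case: ifP => _ //; exact: hmeas.
- exact/finP/pre_meas.
by rewrite ih //; case: ifP => px; rewrite /qq ?measure0 ?mulr1 ?mulr0 //.
Qed.

Lemma Pbridge (p : pred JT) :
  fine (P (Jf @^-1` [set j | p j])) = \sum_(i <- s) qq i * (p i)%:R.
Proof.
rewrite -Pbridge_gen //; congr (fine (P _)); apply/seteqP; split => t /=.
  by move=> ->; rewrite hcov.
by case/andP.
Qed.

Lemma qq_ge0 j : 0 <= qq j.
Proof. by rewrite /qq fine_ge0 // measure_ge0. Qed.

Lemma qq_sum1 : \sum_(j <- s) qq j = 1.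
Proof.
have := Pbridge predT.
rewrite (_ : _ @^-1` _ = setT); last by apply/seteqP; split.
rewrite probability_setT /= => h; rewrite h; apply: eq_bigr => i _; by rewrite mulr1.
Qed.

End Bridge.


Section HnBridge.
Variables (d : measure_display) (T : measurableType d) (R : realType).
Variables (P : probability T R) (JT : eqType) (Jf : T -> JT) (s : seq JT).
Hypothesis us : uniq s.
Hypothesis hcov : forall t, Jf t \in s.
Hypothesis hmeas : forall j, measurable (Jf @^-1` [set j]).

Lemma ent_termE (p : R) : ent_term p = p * - ln p / ln 2.
Proof. rewrite /ent_term /log2; case: eqP => [->|_]; first by rewrite !mul0r. ring. Qed.

Lemma Hn_bridge (V : T -> R) (g : JT -> R) :
  (forall t, V t = g (Jf t)) ->
  shannon_entropy P V = ((HH s (qq P Jf) g) / ln 2)%:E.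
Proof.
move=> hV; rewrite /shannon_entropy.
set C := fun x => \sum_(i <- s) qq P Jf i * (g i == x)%:R.
have pre x : V @^-1` [set x] = Jf @^-1` [set i | g i == x].
  apply/seteqP; split => t /=; rewrite hV; first by move=> ->.
  by move/eqP.
have hC x : fine (P (V @^-1` [set x])) = C x by rewrite pre (@Pbridge _ _ _ P _ Jf s us hcov hmeas).
under eq_esum do rewrite hC.
set u := undup (map g s).
have C0 x : x \notin u -> C x = 0.
  move=> xu; rewrite /C big_seq big1 // => i iss.
  case: eqP => [gx|_]; last by rewrite mulr0.
  by move: xu; rewrite mem_undup -gx map_f.
have Cge0 x : 0 <= C x by rewrite /C sumr_ge0 // => i _; rewrite mulr_ge0 ?qq_ge0.
have Cle1 x : C x <= 1.
  rewrite -(@qq_sum1 _ _ _ P _ Jf s us hcov hmeas) /C; apply: ler_sum => i _.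
  by rewrite ler_piMr ?qq_ge0 //; case: (_ == _).
have ent0 x : (0 <= (ent_term (C x))%:E)%E.
  rewrite lee_fin ent_termE divr_ge0 ?mulr_ge0 ?oppr_ge0 ?ln_le0 //.
  by rewrite ln_ge0 // ler1n.
have -> : (\esum_(x in [set: R]) (ent_term (C x))%:E)%E =
          (\esum_(x in [set` u]) (ent_term (C x))%:E)%E.
  rewrite [RHS]esum_mkcond; apply: eq_esum => x _.
  case: ifP => // /negbT; rewrite mem_setE => xu.
  by rewrite C0 // /ent_term eqxx.
rewrite (esum_fset (finite_seq u)); last by move=> x _; apply: ent0.
rewrite -(fsbig_seq _ _ (undup_uniq (map g s))) sumEFin.
congr (_%:E); rewrite -(@HH_group _ _ s (qq P Jf) _ g u (undup_uniq _)); last first.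
  by move=> j js; rewrite mem_undup map_f.
rewrite mulr_suml; apply: eq_bigr => x _; by rewrite ent_termE.
Qed.

End HnBridge.


Section Floor.
Variable R : realType.

Lemma floor_add2 (u v : R) :
  Num.floor (u + v) - Num.floor u - Num.floor v \in [:: 0; 1].
Proof.
have := floor_itv u; have := floor_itv v; have := floor_itv (u + v).
rewrite !intrD => /andP[a1 a2] /andP[b1 b2] /andP[c1 c2].
set e := Num.floor (u + v) - Num.floor u - Num.floor v.
have h1 : (-1)%:~R < (e%:~R : R) by rewrite /e !intrB; lra.
have h2 : (e%:~R : R) < 2%:~R by rewrite /e !intrB; lra.
rewrite ltr_int in h1; rewrite ltr_int in h2.
rewrite !inE; apply/orP; lia.
Qed.

Lemma floor_add3 (u v w : R) :
  Num.floor (u + v + w) - (Num.floor u + Num.floor v + Num.floor w) \in [:: 0; 1; 2].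
Proof.
have := floor_itv u; have := floor_itv v; have := floor_itv w; have := floor_itv (u + v + w).
rewrite !intrD => /andP[a1 a2] /andP[b1 b2] /andP[c1 c2] /andP[d1 d2].
set e := Num.floor (u + v + w) - _.
have h1 : (-1)%:~R < (e%:~R : R) by rewrite /e !intrB !intrD; lra.
have h2 : (e%:~R : R) < 3%:~R by rewrite /e !intrB !intrD; lra.
rewrite ltr_int in h1; rewrite ltr_int in h2.
rewrite !inE; apply/orP; lia.
Qed.

Lemma floor_sub2 (u v : R) :
  Num.floor (u - v) - (Num.floor u - Num.floor v) \in [:: -1; 0].
Proof.
have := floor_itv u; have := floor_itv v; have := floor_itv (u - v).
rewrite !intrD => /andP[a1 a2] /andP[b1 b2] /andP[c1 c2].
set e := Num.floor (u - v) - _.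
have h1 : (-2)%:~R < (e%:~R : R) by rewrite /e !intrB; lra.
have h2 : (e%:~R : R) < 1%:~R by rewrite /e !intrB; lra.
rewrite ltr_int in h1; rewrite ltr_int in h2.
rewrite !inE; apply/orP; lia.
Qed.

Definition Abox (c : R) (a : int) := [set r : R | Num.floor (c * r) = a].

Lemma Abox_meas c a : 0 < c -> measurable (Abox c a).
Proof.
move=> c0.
have -> : Abox c a = [set` `[a%:~R / c, (a + 1)%:~R / c[%R].
  apply/seteqP; split => r /=; rewrite in_itv /= ler_pdivrMr // ltr_pdivlMr //.
    by move=> <-; rewrite ![r * c]mulrC floor_itv.
  by rewrite ![r * c]mulrC => h; apply/eqP; rewrite floor_eq.
exact: measurable_itv.
Qed.

Lemma floor_bound (x : R) (N : nat) : `|x| <= N%:R ->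
  (- (N%:Z) <= Num.floor x) && (Num.floor x <= N%:Z).
Proof.
move=> hx; have := floor_itv x => /andP[a1 a2].
have h1 : ((- (N%:Z)) - 1)%:~R < (Num.floor x)%:~R :> R.
  rewrite intrB intrN; move: hx a2; rewrite intrD ler_norml => /andP[hx1 hx2]; lra.
have h2 : (Num.floor x)%:~R <= (N%:Z)%:~R :> R.
  move: hx; rewrite ler_norml => /andP[hx1 hx2]; lra.
rewrite ltr_int in h1; rewrite ler_int in h2; lia.
Qed.

Definition Irange (N : nat) : seq int := [seq (i%:Z - N%:Z) | i <- iota 0 (2 * N + 1)].

Lemma in_Irange (N : nat) (k : int) : (- (N%:Z) <= k) && (k <= N%:Z) -> k \in Irange N.
Proof.
move=> /andP[h1 h2]; apply/mapP; exists (absz (k + N%:Z)%R).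
  rewrite mem_iota /= add0n; lia.
lia.
Qed.

End Floor.


Section Gen.
Variables (R : realType) (J : eqType) (s : seq J) (q : J -> R).
Hypothesis q0 : forall j, 0 <= q j.

Lemma HH_ext (V : eqType) (f g : J -> V) : (forall j, g j = f j) -> HH s q g = HH s q f.
Proof.
move=> e; apply/le_anti/andP; split.
  by apply: (HH_le s q0 (h := id)) => j; rewrite e.
by apply: (HH_le s q0 (h := id)) => j; rewrite e.
Qed.

Lemma HH_scale (c : R) (p : J -> int) : 0 < c ->
  HH s q (fun j => (p j)%:~R / c) = HH s q p.
Proof.
move=> c0; apply/le_anti/andP; split.
  by apply: (HH_le s q0 (f := p) (h := fun k => k%:~R / c)).
apply: (HH_le s q0 (f := fun j => (p j)%:~R / c) (h := fun r => Num.floor (c * r))) => j.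
by rewrite mulrC divfK ?gt_eqF // intrKfloor.
Qed.

End Gen.

Definition prod2 (U : eqType) (A : seq U) (B : seq int) : seq (U * int) :=
  [seq (a, b) | a <- A, b <- B].

Lemma in_prod2 (U : eqType) (A : seq U) (B : seq int) a b :
  a \in A -> b \in B -> (a, b) \in prod2 A B.
Proof. by move=> ha hb; apply: (allpairs_f pair ha hb). Qed.

Section Main.
Variables (R : realType) (d : measure_display) (T : measurableType d).
Variables (P : probability T R) (X Y Z : T -> R) (n : nat).
Hypotheses (mX : measurable_fun setT X) (mY : measurable_fun setT Y) (mZ : measurable_fun setT Z).
Hypothesis ind : independent3 P X Y Z.
Hypotheses (bX : bounded_rv X) (bY : bounded_rv Y) (bZ : bounded_rv Z).

Let c : R := 2 ^+ n.
Let c0 : 0 < c. Proof. by rewrite /c exprn_gt0. Qed.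
Let F (W : T -> R) t := Num.floor (c * W t).
Let XZ t := X t + Z t.
Let YZ t := Y t + Z t.
Let XYZ t := X t + Y t + Z t.
Let XY t := X t + Y t.
Let XmY t := X t - Y t.

Definition JT := (int * int * int * int * int * int * int * int)%type.

Let Jt (t : T) : JT :=
  (F X t, F Y t, F Z t, F XZ t, F YZ t, F XYZ t, F XY t, F XmY t).

Let px (j : JT) := j.1.1.1.1.1.1.1.
Let py (j : JT) := j.1.1.1.1.1.1.2.
Let pz (j : JT) := j.1.1.1.1.1.2.
Let pa (j : JT) := j.1.1.1.1.2.
Let pb (j : JT) := j.1.1.1.2.
Let pc (j : JT) := j.1.1.2.
Let pd (j : JT) := j.1.2.
Let pe (j : JT) := j.2.

Let pre_meas (W : T -> R) (a : int) : measurable_fun setT W -> measurable (W @^-1` Abox c a).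
Proof. by move=> mW; rewrite -[_ @^-1` _]setTI; apply: mW => //; exact: Abox_meas. Qed.

Let mXZ : measurable_fun setT XZ. Proof. exact: measurable_realfun.measurable_funD. Qed.
Let mYZ : measurable_fun setT YZ. Proof. exact: measurable_realfun.measurable_funD. Qed.
Let mXYZ : measurable_fun setT XYZ.
Proof. by apply: measurable_realfun.measurable_funD => //; exact: measurable_realfun.measurable_funD. Qed.
Let mXY : measurable_fun setT XY. Proof. exact: measurable_realfun.measurable_funD. Qed.
Let mXmY : measurable_fun setT XmY. Proof. exact: measurable_realfun.measurable_funB. Qed.

Let hmeas j : measurable (Jt @^-1` [set j]).
Proof.
case: j => [[[[[[[a1 a2] a3] a4] a5] a6] a7] a8].
have -> : Jt @^-1` [set (a1, a2, a3, a4, a5, a6, a7, a8)] =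
  X @^-1` Abox c a1 `&` Y @^-1` Abox c a2 `&` Z @^-1` Abox c a3 `&`
  XZ @^-1` Abox c a4 `&` YZ @^-1` Abox c a5 `&` XYZ @^-1` Abox c a6 `&`
  XY @^-1` Abox c a7 `&` XmY @^-1` Abox c a8.
  apply/seteqP; split => t /=.
    by case=> h1 h2 h3 h4 h5 h6 h7 h8.
  by case=> [[[[[[[h1 h2] h3] h4] h5] h6] h7] h8]; rewrite /Jt /F h1 h2 h3 h4 h5 h6 h7 h8.
by repeat apply: measurableI; apply: pre_meas.
Qed.

Let MX : R := let: exist M _ := cid bX in `|M|.
Let MY : R := let: exist M _ := cid bY in `|M|.
Let MZ : R := let: exist M _ := cid bZ in `|M|.
Let MX0 : 0 <= MX. Proof. by rewrite /MX; case: cid. Qed.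
Let MY0 : 0 <= MY. Proof. by rewrite /MY; case: cid. Qed.
Let MZ0 : 0 <= MZ. Proof. by rewrite /MZ; case: cid. Qed.
Let B : R := MX + MY + MZ.
Let hXB t : `|X t| <= MX.
Proof. by rewrite /MX; case: cid => M hM; apply: le_trans (hM t) (ler_norm _). Qed.
Let hYB t : `|Y t| <= MY.
Proof. by rewrite /MY; case: cid => M hM; apply: le_trans (hM t) (ler_norm _). Qed.
Let hZB t : `|Z t| <= MZ.
Proof. by rewrite /MZ; case: cid => M hM; apply: le_trans (hM t) (ler_norm _). Qed.

Let N : nat := Num.bound (c * B).

Let FN (W : T -> R) : (forall t, `|W t| <= B) -> forall t, F W t \in Irange N.
Proof.
move=> hW t; apply: in_Irange; apply: floor_bound.
have hB : 0 <= c * B.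
  by apply: mulr_ge0; [exact: ltW | rewrite /B; move: MX0 MY0 MZ0; lra].
apply: le_trans (ltW (archi_boundP hB)); rewrite normrM gtr0_norm //.
by rewrite ler_pM2l.
Qed.

Let bndX t : `|X t| <= B.
Proof. have := hXB t; have := hYB t; have := hZB t; rewrite /B; move: MX0 MY0 MZ0; lra. Qed.
Let bndY t : `|Y t| <= B.
Proof. have := hXB t; have := hYB t; have := hZB t; rewrite /B; move: MX0 MY0 MZ0; lra. Qed.
Let bndZ t : `|Z t| <= B.
Proof. have := hXB t; have := hYB t; have := hZB t; rewrite /B; move: MX0 MY0 MZ0; lra. Qed.
Let bndXZ t : `|XZ t| <= B.
Proof.
apply: le_trans (ler_normD _ _) _.
have := hXB t; have := hYB t; have := hZB t; rewrite /B; move: MX0 MY0 MZ0; lra.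
Qed.
Let bndYZ t : `|YZ t| <= B.
Proof.
apply: le_trans (ler_normD _ _) _.
have := hXB t; have := hYB t; have := hZB t; rewrite /B; move: MX0 MY0 MZ0; lra.
Qed.
Let bndXY t : `|XY t| <= B.
Proof.
apply: le_trans (ler_normD _ _) _.
have := hXB t; have := hYB t; have := hZB t; rewrite /B; move: MX0 MY0 MZ0; lra.
Qed.
Let bndXmY t : `|XmY t| <= B.
Proof.
apply: le_trans (ler_normB _ _) _.
have := hXB t; have := hYB t; have := hZB t; rewrite /B; move: MX0 MY0 MZ0; lra.
Qed.
Let bndXYZ t : `|XYZ t| <= B.
Proof.
apply: le_trans (ler_normD _ _) _.
apply: le_trans (lerD (ler_normD _ _) (lexx _)) _.
have := hXB t; have := hYB t; have := hZB t; rewrite /B; lra.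
Qed.

Let Ir := Irange N.
Let s0 : seq JT := prod2 (prod2 (prod2 (prod2 (prod2 (prod2 (prod2 Ir Ir) Ir) Ir) Ir) Ir) Ir) Ir.
Let s : seq JT := [seq j <- undup s0 | `[< exists t, Jt t = j >]].

Let us : uniq s. Proof. by rewrite filter_uniq // undup_uniq. Qed.
Let hcov t : Jt t \in s.
Proof.
rewrite mem_filter mem_undup; apply/andP; split; first by apply/asboolP; exists t.
by repeat apply: in_prod2; apply: FN.
Qed.
Let real j : j \in s -> exists t, Jt t = j.
Proof. by rewrite mem_filter => /andP[/asboolP]. Qed.

Let q := qq P Jt.
Let hq0 : forall j, 0 <= q j := qq_ge0 P Jt.
Let hq1 : \sum_(j <- s) q j = 1 := qq_sum1 P us hcov hmeas.
Let H (V : eqType) (f : JT -> V) := HH s q f.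

Let corr_up (g base dl : JT -> int) (r : seq int) :
  (forall j, g j = base j + dl j) -> (forall j, j \in s -> dl j \in r) -> (0 < size r)%N ->
  H g <= H base + ln (size r)%:R.
Proof.
move=> hg hr r0.
apply: le_trans (HH_le s hq0 (f := fun j => (base j, dl j)) (h := fun p => p.1 + p.2) _) _.
  by move=> j; rewrite hg.
apply: le_trans (HH_subadd hq0 hq1 _ _) _.
by rewrite lerD2l; apply: HH_logbound.
Qed.

Let sxz j : int := px j + pz j.
Let syz j : int := py j + pz j.
Let sxyz j : int := px j + py j + pz j.
Let sxy j : int := px j + py j.
Let sxmy j : int := px j - py j.

Let mulD3 (u v w : R) : c * (u + v + w) = c * u + c * v + c * w.
Proof. by ring. Qed.

Let Ca : H sxz <= H pa + ln 2.
Proof.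
apply: (corr_up (dl := fun j => - (pa j - px j - pz j)) (r := [:: 0; -1])) => //.
  by move=> j; rewrite /sxz; ring.
move=> j /real [t <-]; have := floor_add2 (c * X t) (c * Z t).
by rewrite /pa /px /pz /= /F /XZ mulrDr !inE => /orP[] /eqP ->.
Qed.

Let Cb : H syz <= H pb + ln 2.
Proof.
apply: (corr_up (dl := fun j => - (pb j - py j - pz j)) (r := [:: 0; -1])) => //.
  by move=> j; rewrite /syz; ring.
move=> j /real [t <-]; have := floor_add2 (c * Y t) (c * Z t).
by rewrite /pb /py /pz /= /F /YZ mulrDr !inE => /orP[] /eqP ->.
Qed.

Let Cc : H pc <= H sxyz + ln 3.
Proof.
apply: (corr_up (dl := fun j => pc j - sxyz j) (r := [:: 0; 1; 2])) => //.
  by move=> j; ring.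
move=> j /real [t <-]; have := floor_add3 (c * X t) (c * Y t) (c * Z t).
by rewrite /pc /sxyz /px /py /pz /= /F /XYZ mulD3.
Qed.

Let Cd : H pd <= H sxy + ln 2.
Proof.
apply: (corr_up (dl := fun j => pd j - px j - py j) (r := [:: 0; 1])) => //.
  by move=> j; rewrite /sxy; ring.
move=> j /real [t <-]; have := floor_add2 (c * X t) (c * Y t).
by rewrite /pd /px /py /= /F /XY mulrDr.
Qed.

Let Ce : H pe <= H sxmy + ln 2.
Proof.
apply: (corr_up (dl := fun j => pe j - (px j - py j)) (r := [:: -1; 0])) => //.
  by move=> j; rewrite /sxmy; ring.
move=> j /real [t <-]; have := floor_sub2 (c * X t) (c * Y t).
by rewrite /pe /px /py /= /F /XmY mulrBr.
Qed.

Let QQ_pre (V : eqType) (f : JT -> V) j :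
  QQ s q f j = fine (P (Jt @^-1` [set i | f i == f j])).
Proof. by rewrite (Pbridge P us hcov hmeas). Qed.

Let xyz j := (px j, py j, pz j).

Let fP A : measurable A -> P A \is a fin_num.
Proof. by move=> mA; apply: fin_num_measure. Qed.

Let Hind : H xyz = H px + H py + H pz.
Proof.
apply: (HH_indep hq0) => j _; rewrite !QQ_pre.
have e1 : Jt @^-1` [set i | px i == px j] = X @^-1` Abox c (px j).
  by apply/seteqP; split => t /=; [move/eqP|move=> h; apply/eqP].
have e2 : Jt @^-1` [set i | py i == py j] = Y @^-1` Abox c (py j).
  by apply/seteqP; split => t /=; [move/eqP|move=> h; apply/eqP].
have e3 : Jt @^-1` [set i | pz i == pz j] = Z @^-1` Abox c (pz j).
  by apply/seteqP; split => t /=; [move/eqP|move=> h; apply/eqP].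
have e : Jt @^-1` [set i | (px i, py i, pz i) == (px j, py j, pz j)] =
   X @^-1` Abox c (px j) `&` Y @^-1` Abox c (py j) `&` Z @^-1` Abox c (pz j).
  apply/seteqP; split => t /=; rewrite !xpair_eqE.
    by case/andP => /andP[/eqP h1 /eqP h2] /eqP h3.
  by case=> [[h1 h2] h3]; apply/andP; split; [apply/andP; split|]; apply/eqP.
rewrite e e1 e2 e3 ind; try exact: Abox_meas.
have m1 := pre_meas (px j) mX; have m2 := pre_meas (py j) mY; have m3 := pre_meas (pz j) mZ.
by rewrite fineM ?fin_numM ?fP // fineM ?fP.
Qed.

Let SA : H sxyz + H pz <= H sxz + H syz.
Proof.
pose U j := (px j, syz j); pose V j := (sxz j, py j).
have hw : forall j, (U j).1 + (U j).2 = (V j).1 + (V j).2.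
  by move=> j; rewrite /= /syz /sxz; ring.
have := HH_submod hq0 hq1 (f := U) (g := V) (w1 := fun p => p.1 + p.2) (w2 := fun p => p.1 + p.2) hw.
have h1 : H xyz <= H (fun j => (U j, V j)).
  apply: (HH_le s hq0 (h := fun p => let: ((a, b), (c, e)) := p in (a, e, b - e))) => j.
  by rewrite /= /xyz /syz [py j + pz j]addrC addrK.
have h2 : H (fun j => (U j).1 + (U j).2) = H sxyz.
  by apply: HH_ext => // j; rewrite /= /sxyz /syz addrA.
have h3 : H U <= H px + H syz := HH_subadd hq0 hq1 _ _.
have h4 : H V <= H sxz + H py := HH_subadd hq0 hq1 _ _.
have Hi := Hind; rewrite /H in h1 h2 h3 h4 Hi *; rewrite h2; move: Hi; lra.
Qed.

Let SB : H sxy <= H sxyz.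
Proof.
pose U j := (sxy j, pz j); pose V j := (px j, py j).
have hw : forall j, (U j).1 = (V j).1 + (V j).2 by [].
have := HH_submod hq0 hq1 (f := U) (g := V) (w1 := fun p => p.1) (w2 := fun p => p.1 + p.2) hw.
have h1 : H xyz <= H (fun j => (U j, V j)).
  apply: (HH_le s hq0 (h := fun p => let: ((a, b), (c, e)) := p in (c, e, b))) => j.
  by [].
have h2 : H (fun j => (U j).1) = H sxy by apply: HH_ext.
have h3 : H U <= H sxyz + H pz.
  apply: le_trans (HH_subadd hq0 hq1 sxyz pz).
  apply: (HH_le s hq0 (h := fun p => (p.1 - p.2, p.2))) => j.
  by rewrite /= /U /sxyz /sxy addrK.
have h4 : H V <= H px + H py := HH_subadd hq0 hq1 _ _.
have Hi := Hind; rewrite /H in h1 h2 h3 h4 Hi *; rewrite h2; move: Hi; lra.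
Qed.

Let SC : H sxmy + H pz <= H sxz + H syz.
Proof.
pose U j := (sxz j, syz j); pose V j := (px j, py j).
have hw : forall j, (U j).1 - (U j).2 = (V j).1 - (V j).2.
  by move=> j; rewrite /= /syz /sxz; ring.
have := HH_submod hq0 hq1 (f := U) (g := V) (w1 := fun p => p.1 - p.2) (w2 := fun p => p.1 - p.2) hw.
have h1 : H xyz <= H (fun j => (U j, V j)).
  apply: (HH_le s hq0 (h := fun p => let: ((a, b), (c, e)) := p in (c, e, a - c))) => j.
  by rewrite /= /xyz /sxz [px j + pz j]addrC addrK.
have h2 : H (fun j => (U j).1 - (U j).2) = H sxmy.
  by apply: HH_ext => // j; rewrite /= /sxmy /syz /sxz; ring.
have h3 : H U <= H sxz + H syz := HH_subadd hq0 hq1 _ _.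
have h4 : H V <= H px + H py := HH_subadd hq0 hq1 _ _.
have Hi := Hind; rewrite /H in h1 h2 h3 h4 Hi *; rewrite h2; move: Hi; lra.
Qed.

Let hnB (p : JT -> int) (W : T -> R) : (forall t, p (Jt t) = F W t) ->
  Hn P n W = ((H p) / ln 2)%:E.
Proof.
move=> hp; rewrite /Hn (Hn_bridge P us hcov hmeas (g := fun j => (p j)%:~R / c)).
  by rewrite /H HH_scale.
by move=> t; rewrite /Dn hp.
Qed.

Let ln32 : ln 3 <= ln 2 + ln 2 :> R.
Proof.
rewrite -mulr2n -lnXn // ler_ln ?posrE // ?exprn_gt0 //.
by rewrite expr2 -natrM ler_nat.
Qed.

Let L0 : 0 < ln 2 :> R.
Proof. by rewrite ln_gt0 // ltr1n. Qed.

Let fin (a b z e : R) : e <= a + b - z + 4 * ln 2 ->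
  ((e / ln 2)%:E <= (a / ln 2)%:E + (b / ln 2)%:E - (z / ln 2)%:E + ((4%N)%:R)%:E)%E.
Proof.
move=> h; rewrite -EFinD lee_fin.
have -> : a / ln 2 + b / ln 2 - z / ln 2 + (4%N)%:R = (a + b - z + 4 * ln 2) / ln 2.
  by field; rewrite gt_eqF.
by apply: ler_wpM2r => //; rewrite invr_ge0 ltW.
Qed.

Lemma main_sec :
    let RHS := (Hn P n (fun t => (X t + Z t)%R) + Hn P n (fun t => (Y t + Z t)%R)
                - Hn P n Z + ((4%N)%:R)%:E)%E in
    [/\ (Hn P n (fun t => (X t + Y t + Z t)%R) <= RHS)%E,
        (Hn P n (fun t => (X t + Y t)%R) <= RHS)%E &
        (Hn P n (fun t => (X t - Y t)%R) <= RHS)%E].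
Proof.
rewrite /= (hnB (p := pa) (W := XZ)) // (hnB (p := pb) (W := YZ)) //.
rewrite (hnB (p := pz) (W := Z)) // (hnB (p := pc) (W := XYZ)) //.
rewrite (hnB (p := pd) (W := XY)) // (hnB (p := pe) (W := XmY)) //.
move: Ca Cb Cc Cd Ce SA SB SC ln32; rewrite /H => ha hb hc hd he sa sb sc l3.
have l0 := L0; split; apply: fin; lra.
Qed.

End Main.


Theorem mainTheorem9 :
  exists K : nat,
  forall (R : realType) (d : measure_display) (T : measurableType d)
         (P : probability T R) (X Y Z : T -> R) (n : nat),
    measurable_fun setT X -> measurable_fun setT Y -> measurable_fun setT Z ->
    independent3 P X Y Z ->
    bounded_rv X -> bounded_rv Y -> bounded_rv Z ->
    let RHS := (Hn P n (fun t => (X t + Z t)%R) + Hn P n (fun t => (Y t + Z t)%R)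
                - Hn P n Z + (K%:R)%:E)%E in
    [/\ (Hn P n (fun t => (X t + Y t + Z t)%R) <= RHS)%E,
        (Hn P n (fun t => (X t + Y t)%R) <= RHS)%E &
        (Hn P n (fun t => (X t - Y t)%R) <= RHS)%E].
Proof.
exists 4%N => R d T P X Y Z n mX mY mZ ind bX bY bZ.
exact: (main_sec n mX mY mZ ind bX bY bZ).
Qed.
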